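(* Let $(G,* )$ be a group and let $\mathcal{L}$ be a $T_0$-separating nest on $G$. If for every $g\in G$ and every $L\in\mathcal{L}$ we have $g*L\in\mathcal{L}$ and $L*g\in\mathcal{L}$, then $\triangleleft_{\mathcal{L}}$ is compatible with $*$.
   Context: A nest on $G$ is a family of subsets totally ordered by inclusion; it is $T_0$-separating if for all distinct $x,y$ some member contains exactly one of them. $x\triangleleft_{\mathcal{L}} y$ iff there exists $L\in\mathcal{L}$ with $x\in L$ and $y\notin L$. $g*L=\{g*l : l\in L\}$, $L*g=\{l*g : l\in L\}$. The order $\triangleleft_{\mathcal{L}}$ is compatible with $*$ if for all $a,b,g\in G$: $a\triangleleft_{\mathcal{L}} b$ if and only if ($a*g\triangleleft_{\mathcal{L}} b*g$ and $g*a\triangleleft_{\mathcal{L}} g*b$). *)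

(* Defs.v *)
Set Implicit Arguments.

Section Defs.
Variable G : Type.
Variable op : G -> G -> G.

Definition is_group : Prop :=
  (forall x y z, op x (op y z) = op (op x y) z) /\
  exists e : G,
    (forall x, op e x = x /\ op x e = x) /\
    (forall x, exists y, op x y = e /\ op y x = e).

Definition subset (A B : G -> Prop) : Prop := forall x, A x -> B x.

Definition is_nest (F : (G -> Prop) -> Prop) : Prop :=
  forall A B, F A -> F B -> subset A B \/ subset B A.

Definition T0_separating (F : (G -> Prop) -> Prop) : Prop :=
  forall x y, x <> y ->
    exists L, F L /\ ((L x /\ ~ L y) \/ (L y /\ ~ L x)).

Definition tri (F : (G -> Prop) -> Prop) (x y : G) : Prop :=
  exists L, F L /\ L x /\ ~ L y.

Definition lmul (g : G) (L : G -> Prop) : G -> Prop :=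
  fun x => exists l, L l /\ x = op g l.
Definition rmul (L : G -> Prop) (g : G) : G -> Prop :=
  fun x => exists l, L l /\ x = op l g.

Definition compatible (F : (G -> Prop) -> Prop) : Prop :=
  forall a b g, tri F a b <->
    (tri F (op a g) (op b g) /\ tri F (op g a) (op g b)).
End Defs.

(* Main.v *)
Require Import Defs.

Theorem proposition5p1 (G : Type) (op : G -> G -> G) (F : (G -> Prop) -> Prop)
  (Hgrp : is_group op) (Hnest : is_nest F) (HT0 : T0_separating F)
  (Hinv : forall g L, F L -> F (lmul op g L) /\ F (rmul op L g)) :
  compatible op F.
Proof.
  destruct Hgrp as [Ha [e [He Hi]]].
  assert (rc : forall x y g, op x g = op y g -> x = y).
  { intros x y g H. destruct (Hi g) as [h [H1 H2]].
    assert (op (op x g) h = op (op y g) h) by (rewrite H; reflexivity).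
    rewrite <- !Ha, H1 in H0. destruct (He x), (He y). congruence. }
  assert (lc : forall x y g, op g x = op g y -> x = y).
  { intros x y g H. destruct (Hi g) as [h [H1 H2]].
    assert (op h (op g x) = op h (op g y)) by (rewrite H; reflexivity).
    rewrite !Ha, H2 in H0. destruct (He x), (He y). congruence. }
  intros a b g; split.
  - intros [L [FL [La Lb]]]. split.
    + exists (rmul op L g). split; [apply Hinv; auto|]. split.
      * exists a; auto.
      * intros [l [Ll E]]. apply rc in E. subst. auto.
    + exists (lmul op g L). split; [apply Hinv; auto|]. split.
      * exists a; auto.
      * intros [l [Ll E]]. apply lc in E. subst. auto.
  - intros [[L [FL [La Lb]]] _].
    destruct (Hi g) as [h [H1 H2]].
    exists (rmul op L h). split; [apply Hinv; auto|]. split.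
    + exists (op a g). split; auto. rewrite <- Ha, H1. destruct (He a); auto.
    + intros [l [Ll E]]. apply Lb.
      assert (op b g = op (op l h) g) by (rewrite E; reflexivity).
      rewrite <- Ha, H2 in H. destruct (He l). congruence.
Qed.
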